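(* Let $X$ be a Hausdorff hereditarily disconnected space. If $\mathcal{C}\subset\mathcal{K}(X)$ is a connected set with more than one point and $K\in\mathcal{C}$, then there is a closed subset $F\subset X$ with $K\subsetneq F$ such that the set $\mathcal{D}=\{K\cup\{x\}:x\in F\}$ is a connected subset of $\mathcal{K}(X)$ and $|\mathcal{D}|>1$.
   Context: $\mathcal{K}(X)$ is the set of nonempty compact subsets of $X$ with the Vietoris topology (generated by $U^+=\{A: A\subset U\}$ and $U^-=\{A: A\cap U\neq\emptyset\}$ for $U$ open in $X$). A space is hereditarily disconnected if every nonempty connected subset is a singleton. *)

(* Defs.v *)
From HB Require Import structures.
From mathcomp Require Import all_boot all_order all_algebra.
From mathcomp Require Import all_classical all_reals all_analysis.
Set Implicit Arguments. Unset Strict Implicit. Unset Printing Implicit Defensive.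
Local Open Scope classical_set_scope.

Definition hereditarily_disconnected (X : topologicalType) : Prop :=
  forall A : set X, A !=set0 -> connected A -> exists x : X, A = [set x].

Definition nonempty_compact (X : topologicalType) (A : set X) : Prop :=
  A !=set0 /\ compact A.

Definition hyperspace (X : topologicalType) : Type :=
  {A : set X | nonempty_compact A}.

Definition hval (X : topologicalType) (A : hyperspace X) : set X := proj1_sig A.

(* Vietoris subbasis: index (true, U) gives U^+ = {A | A ⊆ U},
   index (false, U) gives U^- = {A | A ∩ U ≠ ∅}, for U open in X. *)
Definition vietoris_subbase (X : topologicalType) (i : bool * set X)
  : set (hyperspace X) :=
  if i.1 then [set A | hval A `<=` i.2] else [set A | hval A `&` i.2 !=set0].

Section HyperspaceTopology.
Variable X : topologicalType.
HB.instance Definition _ := gen_eqMixin (hyperspace X).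
HB.instance Definition _ := gen_choiceMixin (hyperspace X).
HB.instance Definition _ := isSubBaseTopological.Build (hyperspace X)
  [set i : bool * set X | open i.2] (@vietoris_subbase X).
End HyperspaceTopology.

(* Main.v *)
Require Import Defs.
From HB Require Import structures.
From mathcomp Require Import all_boot all_order all_algebra.
From mathcomp Require Import all_classical all_reals all_analysis.
Local Open Scope classical_set_scope.
Section S.
Variable X : topologicalType.
Lemma sub_open (U : set X) b : open U -> open (vietoris_subbase (b, U)).
Proof.
move=> oU.
exists [set vietoris_subbase (b, U)]; last by rewrite bigcup_set1.
move=> _ ->. exact: (@finI_from1 _ _ [set i : bool * set X | open i.2] (@vietoris_subbase X) (b,U)).
Qed.
Lemma hcont (T : topologicalType) (f : T -> hyperspace X) :
  (forall U, open U -> open (f @^-1` [set A | hval A `<=` U]) /\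
                       open (f @^-1` [set A | hval A `&` U !=set0])) ->
  continuous f.
Proof.
move=> H; apply/continuousP => A [D' sD' <-]; rewrite preimage_bigcup /=.
apply: bigcup_open => S /sD' [E sE <-]; rewrite preimage_bigcap bigcap_fset big_seq.
apply: big_ind; [exact: openT | exact: openI |].
move=> [b U] /sE; rewrite inE /= => oU; have [H1 H2] := H U oU; by case: b.
Qed.

Lemma dcl (Z : set X) (Fm : set (set X)) : compact Z ->
  (forall W, Fm W -> open W) -> Fm !=set0 ->
  (forall W W', Fm W -> Fm W' -> exists2 W'', Fm W'' & W `|` W' `<=` W'') ->
  (forall z, Z z -> exists2 W, Fm W & W z) ->
  exists2 W, Fm W & Z `<=` W.
Proof.
move=> cZ oF [W0 FW0] dir cov.
apply: contrapT => /forall2NP Hn.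
have ne W : Fm W -> (Z `\` W) !=set0.
  move=> FW; have [//|nsub] := Hn W.
  have /existsNP [z /not_implyP [Zz nWz]] : ~ (forall z, Z z -> W z) := nsub.
  by exists z.
have FF : ProperFilter (filter_from Fm (fun W => Z `\` W)).
  apply: filter_from_proper; last by move=> W /ne.
  apply: filter_from_filter; first by exists W0.
  move=> W W' FW FW'; have [W'' FW'' sub] := dir W W' FW FW'.
  exists W'' => // z [Zz nW]; split; split => // Wz; apply: nW; apply: sub.
    by left.
  by right.
have [y [Zy cly]] := cZ _ FF (ex_intro2 _ _ W0 FW0 (fun z (h : (Z `\` W0) z) => h.1)).
have [W FW Wy] := cov y Zy.
have [z [[_ nWz] Wz]] := cly (Z `\` W) W (ex_intro2 _ _ W FW (fun z h => h)) (open_nbhs_nbhs (conj (oF W FW) Wy)).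
exact: nWz.
Qed.

Variable hX : hausdorff_space X.

Lemma sep_pt (a : X) (B : set X) : compact B -> ~ B a ->
  exists U W, [/\ open U, open W, U a, B `<=` W & U `&` W = set0].
Proof.
move=> cB nBa.
pose Fm := [set W : set X | open W /\ exists U, [/\ open U, U a & U `&` W = set0]].
have [] := @dcl B Fm cB.
- by move=> W [].
- exists set0; split; first exact: open0.
  by exists setT; split => //; [exact: openT | rewrite setI0].
- move=> W W' [oW [U [oU Ua UW]]] [oW' [U' [oU' U'a U'W']]].
  exists (W `|` W') => //; split; first exact: openU.
  exists (U `&` U'); split => //; [exact: openI|].
  apply/seteqP; split => // z [[Uz U'z] [Wz|W'z]].
    by have : (U `&` W) z by []; rewrite UW.
  by have : (U' `&` W') z by []; rewrite U'W'.
- move=> z Bz; have az : a != z by apply/eqP => az; apply: nBa; rewrite az.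
  move: hX; rewrite open_hausdorff => /(_ a z az) [[U W] /= [Ua Wz] [oU oW /eqP UW]].
  exists W; last by rewrite inE in Wz.
  split => //; exists U; split => //; by rewrite inE in Ua.
- move=> W [oW [U [oU Ua UW]]] BW; by exists U, W.
Qed.

Lemma sep_cpt (A B : set X) : compact A -> compact B -> A `&` B = set0 ->
  exists U W, [/\ open U, open W, A `<=` U, B `<=` W & U `&` W = set0].
Proof.
move=> cA cB AB.
pose Fm := [set U : set X | open U /\ exists W, [/\ open W, B `<=` W & U `&` W = set0]].
have [] := @dcl A Fm cA.
- by move=> W [].
- exists set0; split; first exact: open0.
  by exists setT; split => //; [exact: openT | rewrite set0I].
- move=> W W' [oW [U [oU Ua UW]]] [oW' [U' [oU' U'a U'W']]].
  exists (W `|` W') => //; split; first exact: openU.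
  exists (U `&` U'); split => //; [exact: openI| by move=> z Bz; split; auto |].
  apply/seteqP; split => // z [[Wz|W'z] [Uz U'z]].
    by have : (W `&` U) z by []; rewrite UW.
  by have : (W' `&` U') z by []; rewrite U'W'.
- move=> z Az; have nBz : ~ B z.
    by move=> Bz; have : (A `&` B) z by []; rewrite AB.
  have [U [W [oU oW Uz BW UW]]] := @sep_pt z B cB nBz.
  by exists U => //; split => //; exists W.
- move=> U [oU [W [oW BW UW]]] AU; by exists U, W.
Qed.

Definition splitK (K0 : set X) (P : set X * set X) :=
  [/\ open P.1, open P.2, K0 `<=` P.1 `|` P.2 & K0 `&` P.1 `&` P.2 = set0].
Definition Sx (K0 : set X) (x : X) := [set P | splitK K0 P /\ P.1 x].
Definition Qx (K0 : set X) (x : X) := \bigcap_(P in Sx K0 x) (K0 `&` P.1).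

Lemma split_disj {K0 P z} : splitK K0 P -> K0 z -> P.1 z -> P.2 z -> False.
Proof. by case=> _ _ _ e k1 k2 k3; have : (K0 `&` P.1 `&` P.2) z by []; rewrite e. Qed.

Lemma split_closed K0 P : compact K0 -> splitK K0 P -> closed (K0 `&` P.1).
Proof.
move=> cK sP; have -> : K0 `&` P.1 = K0 `&` ~` P.2.
  apply/seteqP; split => z [Kz Pz]; split => //.
    by move=> P2z; exact: (split_disj sP Kz Pz P2z).
  by case: sP => _ _ cov _; case: (cov z Kz).
apply: closedI; first exact: compact_closed.
by apply: open_closedC; case: sP.
Qed.

Lemma splitI K0 P P' : splitK K0 P -> splitK K0 P' ->
  splitK K0 (P.1 `&` P'.1, P.2 `|` P'.2).
Proof.
move=> sP sP'; have [h1 h2 c _] := sP; have [h1' h2' c' _] := sP'.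
split => /=; [exact: openI|exact: openU| |].
  move=> z Kz; case: (c z Kz) => [P1z|P2z]; last by right; left.
  case: (c' z Kz) => [P1z'|P2z']; last by right; right.
  by left.
apply/seteqP; split => // z [[Kz [P1z P1z']] [P2z|P2z']].
  exact: (split_disj sP Kz P1z P2z).
exact: (split_disj sP' Kz P1z' P2z').
Qed.

Lemma Sx_triv K0 x : Sx K0 x (setT, set0).
Proof.
split => //; split => /=; [exact: openT|exact: open0| by move=> z; left|].
by rewrite setI0.
Qed.

Lemma Q_sub_K K0 x : Qx K0 x `<=` K0.
Proof. by move=> z /(_ _ (Sx_triv K0 x)) []. Qed.

Lemma Q_closed K0 x : compact K0 -> closed (Qx K0 x).
Proof. by move=> cK; apply: closed_bigI => P [sP _]; exact: split_closed. Qed.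

Lemma Q_x {K0 x} : K0 x -> Qx K0 x x.
Proof. by move=> Kx P [_ P1x]. Qed.

Lemma fip K0 x (Z : set X) : compact K0 -> closed Z -> Z `<=` K0 ->
  Z `&` Qx K0 x = set0 -> exists2 P, Sx K0 x P & Z `<=` P.2.
Proof.
move=> cK clZ ZK ZQ.
have cZ : compact Z by exact: (subclosed_compact clZ cK).
have [] := @dcl Z [set W | exists2 P, Sx K0 x P & W = P.2] cZ.
- by move=> W [P [[_ oP _ _] _] ->].
- by exists set0, (setT, set0) => //; exact: Sx_triv.
- move=> W W' [P SP ->] [P' SP' ->]; exists (P.2 `|` P'.2) => //.
  exists (P.1 `&` P'.1, P.2 `|` P'.2) => //; split; last by split; case: SP; case: SP'.
  by apply: splitI; [case: SP|case: SP'].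
- move=> z Zz; have nQ : ~ Qx K0 x z.
    by move=> Qz; have : (Z `&` Qx K0 x) z by []; rewrite ZQ.
  have /existsNP [P /not_implyP [SP nKP]] : ~ (forall P, Sx K0 x P -> (K0 `&` P.1) z) := nQ.
  exists P.2; first by exists P.
  have [[_ _ c _] _] := SP; case: (c z (ZK z Zz)) => // P1z.
  by exfalso; apply: nKP; split => //; exact: ZK.
- by move=> W [P SP ->] ZP; exists P.
Qed.

Lemma Q_sub {K0 x} {U W : set X} : compact K0 -> K0 x -> open U -> open W ->
  U `&` W = set0 -> Qx K0 x `<=` U `|` W -> U x -> Qx K0 x `<=` U.
Proof.
move=> cK Kx oU oW UW QUW Ux.
pose Z := K0 `&` ~` (U `|` W).
have clZ : closed Z by apply: closedI; [exact: compact_closed|apply: open_closedC; exact: openU].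
have [|P [sP P1x] ZP] := @fip K0 x Z cK clZ (fun z h => h.1).
  apply/seteqP; split => // z [[Kz nUW] Qz]; exact: nUW (QUW z Qz).
have sP' : Sx K0 x (P.1 `&` U, P.2 `|` W).
  have [h1 h2 c d] := sP.
  split => //; split => /=; [exact: openI|exact: openU| |].
  - move=> z Kz; case: (c z Kz) => [P1z|P2z]; last by right; left.
    have [UWz|nUW] := pselect ((U `|` W) z).
      by case: UWz => [Uz|Wz]; [left|right; right].
    by right; left; apply: ZP.
  - apply/seteqP; split => // z [[Kz [P1z Uz]] [P2z|Wz]].
      exact: (split_disj sP Kz P1z P2z).
    by have : (U `&` W) z by []; rewrite UW.
by move=> z /(_ _ sP') [_ []].
Qed.

Lemma Q_conn {K0 x} : compact K0 -> K0 x -> connected (Qx K0 x).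
Proof.
move=> cK Kx B [b Bb] [G oG BG] [H clH BH].
have clQ := Q_closed K0 x cK.
have cpt (Y : set X) : closed Y -> compact (Qx K0 x `&` Y).
  move=> clY; apply: (subclosed_compact _ cK); first exact: closedI.
  by move=> z [/Q_sub_K].
have dis : (Qx K0 x `&` H) `&` (Qx K0 x `&` ~` G) = set0.
  apply/seteqP; split => // z [[Qz Hz] [_ nGz]].
  apply: nGz; have : B z by rewrite BH.
  by rewrite BG => -[].
have [U [W [oU oW A1U A2W UW]]] := @sep_cpt _ _ (cpt _ clH) (cpt _ (open_closedC oG)) dis.
have QUW : Qx K0 x `<=` U `|` W.
    move=> q Qq; have [Gq|nGq] := pselect (G q); last by right; apply: A2W.
    have Bq : B q by rewrite BG.
    by left; apply: A1U; move: Bq; rewrite BH.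
  have [Gx|nGx] := pselect (G x).
    have Bx : B x by rewrite BG; split => //; exact: Q_x.
    have Ux : U x by apply: A1U; move: Bx; rewrite BH.
    have QU := Q_sub cK Kx oU oW UW QUW Ux.
    rewrite BG; apply/seteqP; split => [z []//|z Qz]; split => //.
    apply: contrapT => nGz.
    have : (U `&` W) z by split; [exact: QU|exact: A2W].
    by rewrite UW.
  have Wx : W x by apply: A2W; split => //; exact: Q_x.
  rewrite setIC in UW.
  have QWU : Qx K0 x `<=` W `|` U by rewrite setUC.
  have QW := Q_sub cK Kx oW oU UW QWU Wx.
  exfalso.
  have : (W `&` U) b.
    by split; [apply: QW; move: Bb; rewrite BG => -[]|apply: A1U; move: Bb; rewrite BH].
  by rewrite UW.
Qed.

Lemma clopen_sep (hd : hereditarily_disconnected X) K0 x (L : set X) :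
  compact K0 -> K0 x -> compact L -> L `<=` K0 -> ~ L x ->
  exists2 P, Sx K0 x P & L `<=` P.2.
Proof.
move=> cK Kx cL LK nLx.
have [y Qy] := hd (Qx K0 x) (ex_intro _ x (Q_x Kx)) (Q_conn cK Kx).
have Qxx := Q_x Kx; rewrite Qy in Qxx.
apply: fip => //; first exact: compact_closed.
apply/seteqP; split => // z [Lz]; rewrite Qy => /= zy.
by apply: nLx; rewrite Qxx -zy.
Qed.

Lemma hval_inj (A B : hyperspace X) : hval A = hval B -> A = B.
Proof.
case: A => a pa; case: B => b pb /= e; subst b.
by congr exist; exact: Prop_irrelevance.
Qed.

Lemma addpt_pf (K : hyperspace X) (x : X) : nonempty_compact (hval K `|` [set x]).
Proof.
split; first by exists x; right.
apply: compactU; [exact: (proj2 (proj2_sig K)) | exact: compact_set1].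
Qed.

Definition addpt (K : hyperspace X) (x : X) : hyperspace X :=
  exist _ (hval K `|` [set x]) (addpt_pf K x).

Lemma addpt_cont K : continuous (addpt K).
Proof.
apply: hcont => U oU; split.
- rewrite openE => x /= Hx.
  apply: filterS (open_nbhs_nbhs (conj oU (Hx x (or_intror erefl)))).
  move=> y Uy z [Kz| ->]; [by apply: Hx; left|exact: Uy].
- rewrite openE => x /= [z [Hz Uz]].
  have [[k [Kk Uk]]|nKU] := pselect (hval K `&` U !=set0).
    apply: filterS (@filterT _ (nbhs x) _) => y _; exists k; split => //; by left.
  case: Hz => [Kz|zx]; first by exfalso; apply: nKU; exists z.
  rewrite zx in Uz.
  apply: filterS (open_nbhs_nbhs (conj oU Uz)) => y Uy; exists y; split => //; by right.
Qed.

Lemma hsep (C : set (hyperspace X)) (O1 O2 : set X) (A0 : hyperspace X) :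
  connected C -> open O1 -> open O2 ->
  (forall A, C A -> hval A `&` O1 !=set0 -> hval A `<=` O2 -> False) ->
  (forall A, C A -> hval A `&` O1 !=set0 \/ hval A `<=` O2) ->
  C A0 -> hval A0 `<=` O2 -> forall A, C A -> hval A `<=` O2.
Proof.
move=> cC oO1 oO2 dj cv CA0 A0O A CA.
have E := cC (C `&` [set A | hval A `<=` O2]) (ex_intro _ A0 (conj CA0 A0O)).
have E' : C `&` [set A | hval A `<=` O2] = C.
  apply: E.
    by exists (vietoris_subbase (true, O2)); [exact: sub_open|].
  exists (~` vietoris_subbase (false, O1)); first by apply: open_closedC; exact: sub_open.
  apply/seteqP; split => B [CB HB]; split => //=.
    by move=> h; exact: dj B CB h HB.
  by case: (cv B CB).
by move: CA; rewrite -E' => -[].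
Qed.
End S.
Arguments clopen_sep {X} _ _ {K0 x L}.
Arguments hsep {X C O1 O2 A0}.
Arguments split_disj {X K0 P z}.
Arguments hval_inj {X A B}.
Arguments addpt_cont {X}.
Arguments addpt {X}.

Theorem proposition5p7 (X : topologicalType)
  (hX : hausdorff_space X) (hd : hereditarily_disconnected X)
  (C : set (hyperspace X)) (K : hyperspace X) :
  connected C -> (exists A B : hyperspace X, [/\ C A, C B & A <> B]) -> C K ->
  exists F : set X, [/\ closed F, hval K `<` F,
    connected [set A : hyperspace X | exists2 x, F x & hval A = hval K `|` [set x]]
    & exists A B : hyperspace X,
        [/\ (exists2 x, F x & hval A = hval K `|` [set x]),
            (exists2 x, F x & hval B = hval K `|` [set x]) & A <> B]].
Proof.
move=> cC [A1 [B1 [CA1 CB1 nAB]]] CK.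
have cL : compact (hval K) := proj2 (proj2_sig K).
have [k Lk] : hval K !=set0 := proj1 (proj2_sig K).
have [[A0 [a [CA0 A0a nLa]]] | Hno] :=
  pselect (exists A0, exists a, [/\ C A0, hval A0 a & ~ hval K a]); last first.
  exfalso.
  have sub A : C A -> hval A `<=` hval K.
    move=> CA z Az; apply: contrapT => nLz; apply: Hno; by exists A, z.
  have claim A B : C A -> C B -> forall a, hval A a -> ~ hval B a -> False.
    move=> CA CB a Aa nBa.
    have [P [sP P1a] BP] := clopen_sep hX hd cL (sub A CA a Aa)
      (proj2 (proj2_sig B)) (sub B CB) nBa.
    have [i1 i2 cov dd] := sP.
    have AP : hval A `<=` P.2.
      apply: (hsep cC i1 i2 _ _ CB BP A CA).
      - move=> D CD h DP.
        by case: h => z [Dz P1z]; exact: split_disj sP (sub D CD z Dz) P1z (DP z Dz).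
      - move=> D CD; have [h|h] := pselect (hval D `<=` P.2); [by right|left].
        have /existsNP [z /not_implyP [Dz nP2z]] : ~ (forall z, hval D z -> P.2 z) := h.
        by case: (cov z (sub D CD z Dz)) => // P1z; exists z.
    exact: split_disj sP (sub A CA a Aa) P1a (AP a Aa).
  apply: nAB; apply: hval_inj; apply/seteqP; split => z Hz; apply: contrapT => nz.
    exact: claim A1 B1 CA1 CB1 z Hz nz.
  exact: claim B1 A1 CB1 CA1 z Hz nz.
pose F := closure (\bigcup_(A in C) hval A).
have CF A : C A -> hval A `<=` F.
  by move=> CA z Az; apply: subset_closure; exists A.
have LF : hval K `<=` F := CF K CK.
have Fa : F a := CF A0 CA0 a A0a.
have key O1 O2 : open O1 -> open O2 -> (forall x, F x -> O1 x -> O2 x -> False) ->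
    (forall x, F x -> O1 x \/ O2 x) -> hval K `<=` O2 -> F `<=` O2.
  move=> o1 o2 dj cv LO.
  have H : forall D, C D -> hval D `<=` O2.
    apply: (hsep cC o1 o2 _ _ CK LO).
    - move=> D CD h DP.
      by case: h => z [Dz O1z]; exact: dj z (CF D CD z Dz) O1z (DP z Dz).
    - move=> D CD; have [h|h] := pselect (hval D `<=` O2); [by right|left].
      have /existsNP [z /not_implyP [Dz nO2z]] : ~ (forall z, hval D z -> O2 z) := h.
      by case: (cv z (CF D CD z Dz)) => // O1z; exists z.
  have U1 : \bigcup_(A in C) hval A `<=` ~` O1.
    by move=> z [D CD Dz] O1z; exact: dj z (CF D CD z Dz) O1z (H D CD z Dz).
  have := closureS U1; rewrite -(proj1 (closure_id _) (open_closedC o1)) => FO1.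
  move=> x Fx; case: (cv x Fx) => // O1x; exfalso; exact: FO1 x Fx O1x.
pose f := addpt K.
have LE x : hval K x -> hval K `|` [set x] = hval K.
  by move=> Lx; apply/seteqP; split => z; [case => // -> | left].
have fK x : hval K x -> f x = K.
  by move=> Lx; apply: hval_inj; rewrite /= LE.
have Dsep (G' H' : set (hyperspace X)) : open G' -> closed H' ->
    (forall x, F x -> G' (f x) <-> H' (f x)) -> G' K -> forall x, F x -> G' (f x).
  move=> oG clH eqv GK.
  have /continuousP fc := addpt_cont K.
  apply: (key (f @^-1` (~` H')) (f @^-1` G')).
  - by apply: fc; exact: closed_openC.
  - exact: fc.
  - by move=> x Fx nH G; exact: nH ((eqv x Fx).1 G).
  - move=> x Fx; have [h|h] := pselect (G' (f x)); [by right|left].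
    by move=> Hh; exact: h ((eqv x Fx).2 Hh).
  - by move=> x Lx; rewrite /preimage /= (fK x Lx).
exists F; split.
- exact: closed_closure.
- by split => // FL; exact: nLa (FL a Fa).
- move=> B0 [b0 Bb0] [G oG BG] [H clH BH].
  have eqv x : F x -> G (f x) <-> H (f x).
    move=> Fx; have Dfx : [set A : hyperspace X | exists2 x, F x & hval A = hval K `|` [set x]] (f x).
      by exists x.
    split => h.
      have : B0 (f x) by rewrite BG.
      by rewrite BH => -[].
    have : B0 (f x) by rewrite BH.
    by rewrite BG => -[].
  have Dfeq A : [set A : hyperspace X | exists2 x, F x & hval A = hval K `|` [set x]] A ->
      exists2 x, F x & A = f x.
    by move=> [x Fx hA]; exists x => //; exact: hval_inj.
  have [BK|BK] := pselect (B0 K).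
    have GK : G K by move: BK; rewrite BG => -[].
    have all := Dsep G H oG clH eqv GK.
    apply/seteqP; split; first by move=> A; rewrite BG => -[].
    move=> A DA; have [x Fx ->] := Dfeq A DA; rewrite BG; split; last exact: all x Fx.
    by exists x.
  exfalso.
  have nHK : (~` H) K.
    move=> HK; apply: BK; rewrite BH; split => //.
    by exists k; [exact: LF | rewrite LE].
  have eqv' x : F x -> (~` H) (f x) <-> (~` G) (f x).
    move=> Fx; have [e1 e2] := eqv x Fx; split => h1 h2; apply: h1; [exact: e1|exact: e2].
  have all := Dsep (~` H) (~` G) (closed_openC clH) (open_closedC oG) eqv' nHK.
  move: Bb0; rewrite BH => -[DB Hb]; have [x Fx eb] := Dfeq b0 DB.
  by apply: (all x Fx); rewrite -eb.
- exists K, (f a); split.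
  + by exists k; [exact: LF | rewrite LE].
  + by exists a.
  + move=> Kfa; apply: nLa; have : hval (f a) a by right.
    by rewrite -Kfa.
Qed.
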